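(* Let $(\mathcal M,g_{ab})$ be a 4-dimensional Lorentzian manifold with a Killing vector $\vec\zeta$, and suppose that on an open set the Ernst one-form admits a potential $\sigma'$ ($\sigma_a=\nabla_a\sigma'$) with $\sigma'\neq0$. Then, on that set, $$\mathcal S_{abc}=\gamma_{a[b}\mathcal S(\sigma')_{c]mrd}\zeta^m\mathcal F^{rd}+4\zeta^m\zeta^r\mathcal S(\sigma')_{mar[c}\sigma_{b]},$$ i.e. the space-time Simon tensor is obtained by replacing $\mathcal C_{abcd}$ by $\mathcal S(\sigma')_{abcd}$ in its definition (in particular this expression is independent of the choice of $\sigma'$).
   Context: $(\mathcal M,g_{ab})$ is a 4-dimensional Lorentzian manifold (signature $(-,+,+,+)$) with volume form $\eta_{abcd}$ and Weyl tensor $C_{abcd}$. For a Killing vector $\vec\zeta$: $\lambda=\zeta_a\zeta^a$, $F_{ab}=\nabla_a\zeta_b$, $F^*_{ab}=\tfrac12\eta_{abcd}F^{cd}$, $\mathcal F_{ab}=F_{ab}+iF^*_{ab}$, $\mathcal F\cdot\mathcal F=\mathcal F_{ab}\mathcal F^{ab}$; $C^*_{abcd}=\tfrac12\eta_{cdpq}C_{ab}{}^{pq}$, $\mathcal C_{abcd}=C_{abcd}+iC^*_{abcd}$; Ernst one-form $\sigma_a=2\mathcal F_{ab}\zeta^b$; $\gamma_{ab}=\zeta_a\zeta_b-\lambda g_{ab}$; $\mathcal I_{abcd}=\tfrac14(i\eta_{abcd}+g_{ac}g_{bd}-g_{ad}g_{bc})$; $\mathcal Q_{abcd}=6(\mathcal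 F_{ab}\mathcal F_{cd}-\tfrac13\mathcal I_{abcd}\,\mathcal F\cdot\mathcal F)$; Mars–Simon tensor $\mathcal S(\sigma')_{abcd}=\mathcal C_{abcd}+\frac1{\sigma'}\mathcal Q_{abcd}$; space-time Simon tensor $\mathcal S_{abc}=\gamma_{a[b}\mathcal C_{c]mrd}\zeta^m\mathcal F^{rd}+4\zeta^m\zeta^r\mathcal C_{mar[c}\sigma_{b]}$. *)

(* Defs.v *)
(* Pointwise (frame) tensor algebra at one point of a
   4-dimensional Lorentzian manifold, in an orthonormal frame. *)
From HB Require Import structures.
From mathcomp Require Import all_boot all_order all_algebra.
Set Implicit Arguments. Unset Strict Implicit. Unset Printing Implicit Defensive.
Import Order.TTheory GRing.Theory Num.Theory.
Local Open Scope ring_scope.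

Section Tensors.
Variable K : numClosedFieldType.  (* scalars: complex-like field; real tensors have Num.real components *)

Definition idx := 'I_4.
Definition t0 : idx := ord0.

(* Orthonormal frame: g_ab = g^ab = diag(-1,1,1,1) *)
Definition sgn (a : idx) : K := if a == t0 then -1 else 1.
Definition gm (a b : idx) : K := if a == b then sgn a else 0.

(* volume form with lower indices, eta_{0123} = +1 *)
Definition vol (a b c d : idx) : K :=
  \det (\matrix_(i < 4, j < 4) ((nth t0 [:: a; b; c; d] i == j)%:R : K)).

Variables (zeta : idx -> K)
          (F : idx -> idx -> K)                  (* F_ab = nabla_a zeta_b *)
          (W : idx -> idx -> idx -> idx -> K).   (* Weyl tensor C_abcd *)

Definition zetaU (a : idx) : K := sgn a * zeta a.
Definition lam : K := \sum_(a < 4) zetaU a * zeta a.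

Definition Fstar (a b : idx) : K :=
  2^-1 * \sum_(c < 4) \sum_(d < 4) vol a b c d * (sgn c * sgn d * F c d).
Definition calF (a b : idx) : K := F a b + 'i * Fstar a b.
Definition calFU (a b : idx) : K := sgn a * sgn b * calF a b.
Definition FdotF : K := \sum_(a < 4) \sum_(b < 4) calF a b * calFU a b.

Definition Wstar (a b c d : idx) : K :=
  2^-1 * \sum_(p < 4) \sum_(q < 4) vol c d p q * (sgn p * sgn q * W a b p q).
Definition calC (a b c d : idx) : K := W a b c d + 'i * Wstar a b c d.

Definition sigma (a : idx) : K := 2%:R * \sum_(b < 4) calF a b * zetaU b.

Definition gam (a b : idx) : K := zeta a * zeta b - lam * gm a b.

Definition calI (a b c d : idx) : K :=
  4%:R^-1 * ('i * vol a b c d + gm a c * gm b d - gm a d * gm b c).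

Definition calQ (a b c d : idx) : K :=
  6%:R * (calF a b * calF c d - 3%:R^-1 * calI a b c d * FdotF).

Definition MarsSimon (s : K) (a b c d : idx) : K :=
  calC a b c d + s^-1 * calQ a b c d.

(* The Simon-type expression built from a 4-tensor T:
   gamma_{a[b} T_{c]mrd} zeta^m calF^{rd} + 4 zeta^m zeta^r T_{mar[c} sigma_{b]},
   with X_[bc] = (X_bc - X_cb)/2. *)
Definition simonOf (T : idx -> idx -> idx -> idx -> K) (a b c : idx) : K :=
  let contr (e : idx) := \sum_(m < 4) \sum_(r < 4) \sum_(d < 4)
                            T e m r d * zetaU m * calFU r d in
  let part2 (e f : idx) := \sum_(m < 4) \sum_(r < 4)
                            zetaU m * zetaU r * T m a r e * sigma f in
  2^-1 * (gam a b * contr c - gam a c * contr b)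
  + 4%:R * (2^-1 * (part2 c b - part2 b c)).

Definition SimonTensor (a b c : idx) : K := simonOf calC a b c.

Definition real_vec := forall a, zeta a \is Num.real.
Definition F_real_antisym := forall a b, F a b \is Num.real /\ F a b = - F b a.
Definition is_weyl :=
  (forall a b c d, W a b c d \is Num.real) /\
  (forall a b c d, W a b c d = - W b a c d) /\
  (forall a b c d, W a b c d = - W a b d c) /\
  (forall a b c d, W a b c d = W c d a b) /\
  (forall a b c d, W a b c d + W a c d b + W a d b c = 0) /\
  (forall b d, \sum_(a < 4) \sum_(c < 4) gm a c * W a b c d = 0).
End Tensors.

(* Main.v *)
Require Import Defs.
From HB Require Import structures.
From mathcomp Require Import all_boot all_order all_algebra.
From mathcomp Require Import ring.
From Stdlib Require Import FunctionalExtensionality.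
Set Implicit Arguments. Unset Strict Implicit.
Set Warnings "-notation-overridden -ambiguous-paths".
Import Order.TTheory GRing.Theory Num.Theory.
Local Open Scope ring_scope.

Ltac expdet := rewrite (expand_det_row _ ord0) !big_ord_recl big_ord0 /cofactor.

Lemma minorE (R : comNzRingType) n (f : nat->nat->R) (j : 'I_n.+1) :
  row' ord0 (col' j (\matrix_(i<n.+1,k<n.+1) f i k)) = \matrix_(i<n,k<n) f (bump 0 i) (bump j k).
Proof. by apply/matrixP=> i k; rewrite !mxE. Qed.
Lemma det2 (R : comNzRingType) (f : nat -> nat -> R) : \det (\matrix_(i<2,j<2) f i j) = f 0 0 * f 1 1 - f 0 1 * f 1 0.
Proof. expdet; rewrite !minorE !det_mx11 !mxE /=. ring. Qed.
Lemma det3 (R : comNzRingType) (f : nat -> nat -> R) : \det (\matrix_(i<3,j<3) f i j) =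
  f 0 0 * (f 1 1 * f 2 2 - f 1 2 * f 2 1) - f 0 1 * (f 1 0 * f 2 2 - f 1 2 * f 2 0)
  + f 0 2 * (f 1 0 * f 2 1 - f 1 1 * f 2 0).
Proof. expdet; rewrite !minorE !(det2 (fun x y => f (bump 0 x) (bump _ y))) !mxE /=. ring. Qed.
Definition d3 {R : comNzRingType} (f : nat -> nat -> R) :=
  f 0 0 * (f 1 1 * f 2 2 - f 1 2 * f 2 1) - f 0 1 * (f 1 0 * f 2 2 - f 1 2 * f 2 0)
  + f 0 2 * (f 1 0 * f 2 1 - f 1 1 * f 2 0).
Lemma det4 (R : comNzRingType) (f : nat -> nat -> R) : \det (\matrix_(i<4,j<4) f i j) =
  f 0 0 * d3 (fun x y => f x.+1 y.+1) - f 0 1 * d3 (fun x y => f x.+1 (bump 1 y))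
  + f 0 2 * d3 (fun x y => f x.+1 (bump 2 y)) - f 0 3 * d3 (fun x y => f x.+1 (bump 3 y)).
Proof. expdet; rewrite !minorE !(det3 (fun x y => f (bump 0 x) (bump _ y))) !mxE /d3 /=. ring. Qed.

Definition epsn (a b c d : nat) : int :=
  match a, b, c, d with
  | 0,1,2,3 => 1 | 0,1,3,2 => -1 | 0,2,1,3 => -1 | 0,2,3,1 => 1 | 0,3,1,2 => 1 | 0,3,2,1 => -1
  | 1,0,2,3 => -1 | 1,0,3,2 => 1 | 1,2,0,3 => 1 | 1,2,3,0 => -1 | 1,3,0,2 => -1 | 1,3,2,0 => 1
  | 2,0,1,3 => 1 | 2,0,3,1 => -1 | 2,1,0,3 => -1 | 2,1,3,0 => 1 | 2,3,0,1 => 1 | 2,3,1,0 => -1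
  | 3,0,1,2 => -1 | 3,0,2,1 => 1 | 3,1,0,2 => 1 | 3,1,2,0 => -1 | 3,2,0,1 => -1 | 3,2,1,0 => 1
  | _,_,_,_ => 0 end.

Lemma volE (K : numClosedFieldType) (a b c d : idx) :
  vol K a b c d = (epsn a b c d)%:~R.
Proof.
rewrite /vol.
have -> : (\matrix_(i<4, j<4) ((nth t0 [:: a; b; c; d] i == j)%:R : K)) =
   \matrix_(i<4,j<4) ((val (nth t0 [:: a; b; c; d] i) == j)%:R : K).
  by apply/matrixP=> i j; rewrite !mxE.
rewrite (det4 (fun x y => ((val (nth t0 [:: a; b; c; d] x) == y)%:R : K))) /d3 /=.
case: a => [[|[|[|[|a]]]] Ha] //; case: b => [[|[|[|[|b]]]] Hb] //;
case: c => [[|[|[|[|c]]]] Hc] //; case: d => [[|[|[|[|d]]]] Hd] //=; ring.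
Qed.

Definition Ft {K : numClosedFieldType} (f01 f02 f03 f12 f13 f23 : K) (x y : idx) : K :=
  match val x, val y with
  | 0,1 => f01 | 1,0 => - f01 | 0,2 => f02 | 2,0 => - f02 | 0,3 => f03 | 3,0 => - f03
  | 1,2 => f12 | 2,1 => - f12 | 1,3 => f13 | 3,1 => - f13 | 2,3 => f23 | 3,2 => - f23
  | _,_ => 0 end.
Definition zt {K : numClosedFieldType} (z0 z1 z2 z3 : K) (x : idx) : K :=
  match val x with 0 => z0 | 1 => z1 | 2 => z2 | _ => z3 end.

Ltac cs x := case: x => [[|[|[|[|?]]]] ?] //.

Lemma FstarE (K : numClosedFieldType) (f01 f02 f03 f12 f13 f23 : K) x y :
  Fstar (Ft f01 f02 f03 f12 f13 f23) x y = Ft f23 (-f13) f12 (-f03) f02 (-f01) x y.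
Proof.
rewrite /Fstar !big_ord_recl !big_ord0 !volE.
cs x; cs y; by rewrite /= /sgn /Ft /=; field.
Qed.

Definition Gt {K : numClosedFieldType} (f01 f02 f03 f12 f13 f23 : K) (x y : idx) : K :=
  Ft f01 f02 f03 f12 f13 f23 x y + 'i * Ft f23 (-f13) f12 (-f03) f02 (-f01) x y.

Lemma calFE (K : numClosedFieldType) (f01 f02 f03 f12 f13 f23 : K) x y :
  calF (Ft f01 f02 f03 f12 f13 f23) x y = Gt f01 f02 f03 f12 f13 f23 x y.
Proof. by rewrite /calF FstarE. Qed.

Definition FFc {K : numClosedFieldType} (f01 f02 f03 f12 f13 f23 : K) : K :=
  let g01 := f01 + 'i * f23 in let g02 := f02 - 'i * f13 in let g03 := f03 + 'i * f12 in
  let g12 := f12 - 'i * f03 in let g13 := f13 + 'i * f02 in let g23 := f23 - 'i * f01 in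
  2%:R * (- g01 ^+ 2 - g02 ^+ 2 - g03 ^+ 2 + g12 ^+ 2 + g13 ^+ 2 + g23 ^+ 2).

Lemma FdotFE (K : numClosedFieldType) (f01 f02 f03 f12 f13 f23 : K) :
  FdotF (Ft f01 f02 f03 f12 f13 f23) = FFc f01 f02 f03 f12 f13 f23.
Proof.
rewrite /FdotF /calFU; under eq_bigr do under eq_bigr do rewrite calFE.
rewrite !big_ord_recl !big_ord0 /Gt /Ft /sgn /FFc /=; ring.
Qed.

Lemma calFF (K : numClosedFieldType) (f01 f02 f03 f12 f13 f23 : K) :
  calF (Ft f01 f02 f03 f12 f13 f23) = Gt f01 f02 f03 f12 f13 f23.
Proof. do 2 apply: functional_extensionality => ?; exact: calFE. Qed.
Lemma volF (K : numClosedFieldType) :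
  vol K = fun a b c d => (epsn a b c d)%:~R.
Proof. do 4 apply: functional_extensionality => ?; exact: volE. Qed.

Definition o0 : idx := @Ordinal 4 0 isT.
Definition o1 : idx := @Ordinal 4 1 isT.
Definition o2 : idx := @Ordinal 4 2 isT.
Definition o3 : idx := @Ordinal 4 3 isT.
Lemma big4 (K : numClosedFieldType) (f : idx -> K) :
  \sum_(i < 4) f i = f o0 + f o1 + f o2 + f o3.
Proof.
rewrite !big_ord_recl big_ord0 addr0 !addrA.
by congr (_ + _ + _ + _); congr f; apply: val_inj.
Qed.

Definition Qt {K : numClosedFieldType} (f01 f02 f03 f12 f13 f23 : K) (a b c d : idx) : K :=
  6%:R * (Gt f01 f02 f03 f12 f13 f23 a b * Gt f01 f02 f03 f12 f13 f23 c d
     - 3%:R^-1 * calI K a b c d * FFc f01 f02 f03 f12 f13 f23).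

Lemma calQF (K : numClosedFieldType) (f01 f02 f03 f12 f13 f23 : K) :
  calQ (Ft f01 f02 f03 f12 f13 f23) = Qt f01 f02 f03 f12 f13 f23.
Proof.
do 4 apply: functional_extensionality => ?.
by rewrite /calQ /Qt FdotFE calFF.
Qed.

Ltac ex4 := rewrite big4 /=.


Lemma idx_cases (P : idx -> Prop) : P o0 -> P o1 -> P o2 -> P o3 -> forall i, P i.
Proof.
move=> H0 H1 H2 H3 [[|[|[|[|i]]]] Hi] //.
- by have -> : Ordinal Hi = o0 by apply: val_inj.
- by have -> : Ordinal Hi = o1 by apply: val_inj.
- by have -> : Ordinal Hi = o2 by apply: val_inj.
- by have -> : Ordinal Hi = o3 by apply: val_inj.
Qed.

Lemma keyP (K : numClosedFieldType) (f01 f02 f03 f12 f13 f23 z0 z1 z2 z3 : K) a b c :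
  (val b < val c)%N ->
  simonOf (zt z0 z1 z2 z3) (Ft f01 f02 f03 f12 f13 f23) (Qt f01 f02 f03 f12 f13 f23) a b c = 0.
Proof.
have Hi : ('i : K) * 'i = -1 by rewrite -expr2 sqrCi.
rewrite /simonOf /=.
rewrite !big4 /=.
rewrite /gam /lam /sigma /calFU /zetaU calFF !big4 /=.
elim/idx_cases: a; elim/idx_cases: b; elim/idx_cases: c => //= _.
all: rewrite /Qt /calI volF /Gt /Ft /FFc /gm /sgn /zt /=; field: Hi.
all: done.
Qed.

Lemma simon_antisym (K : numClosedFieldType) zeta F (T : idx -> idx -> idx -> idx -> K) a b c :
  simonOf zeta F T a b c = - simonOf zeta F T a c b.
Proof. rewrite /simonOf /=; ring. Qed.

Lemma simon_diag (K : numClosedFieldType) zeta F (T : idx -> idx -> idx -> idx -> K) a b :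
  simonOf zeta F T a b b = 0.
Proof. rewrite /simonOf /=; ring. Qed.

Lemma simon_lin (K : numClosedFieldType) zeta F (T1 T2 : idx -> idx -> idx -> idx -> K) k a b c :
  simonOf zeta F (fun a b c d => T1 a b c d + k * T2 a b c d) a b c
  = simonOf zeta F T1 a b c + k * simonOf zeta F T2 a b c.
Proof. rewrite /simonOf /= !big4 /=; ring. Qed.

Lemma key (K : numClosedFieldType) (f01 f02 f03 f12 f13 f23 z0 z1 z2 z3 : K) a b c :
  simonOf (zt z0 z1 z2 z3) (Ft f01 f02 f03 f12 f13 f23) (Qt f01 f02 f03 f12 f13 f23) a b c = 0.
Proof.
case: (ltngtP (val b) (val c)) => H.
- exact: keyP.
- by rewrite simon_antisym keyP // oppr0.
- have -> : b = c by apply: val_inj.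
  exact: simon_diag.
Qed.

Lemma x_eq0 (K : numClosedFieldType) (x : K) : x = - x -> x = 0.
Proof.
move=> H; have : x *+ 2 = 0 by rewrite mulr2n {1}H addNr.
by move/eqP; rewrite mulrn_eq0 /= => /eqP.
Qed.

Theorem mainTheorem8 (K : numClosedFieldType)
  (zeta : idx -> K) (F : idx -> idx -> K) (W : idx -> idx -> idx -> idx -> K)
  (sigma' : K) :
  real_vec zeta -> F_real_antisym F -> is_weyl W ->
  sigma' != 0 ->
  forall a b c : idx,
    SimonTensor zeta F W a b c = simonOf zeta F (MarsSimon F W sigma') a b c.
Proof.
move=> _ HF _ _ a b c.
have HFa : forall x y, F x y = - F y x by move=> x y; case: (HF x y).
rewrite /SimonTensor /MarsSimon (simon_lin zeta F (calC W) (calQ F)).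
have -> : simonOf zeta F (calQ F) a b c = 0.
  have -> : F = Ft (F o0 o1) (F o0 o2) (F o0 o3) (F o1 o2) (F o1 o3) (F o2 o3).
    apply: functional_extensionality => x; apply: functional_extensionality => y.
    elim/idx_cases: x; elim/idx_cases: y; rewrite /Ft /=;
      by [ apply: x_eq0; apply: HFa | apply: HFa | ].
  have -> : zeta = zt (zeta o0) (zeta o1) (zeta o2) (zeta o3).
    by apply: functional_extensionality; elim/idx_cases.
  by rewrite calQF key.
by rewrite mulr0 addr0.
Qed.
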